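(* Let $X,Y$ be random variables with $X$ taking values in $\mathcal{X}$ and $Y\in\{0,1\}$. Let $\mu:\mathcal{X}\to[0,1]$ be measurable and assume the distribution of $\mu(X)$ is supported on all of $[0,1]$. Let $c_0\ge 0$ and $c:\mathcal{X}\to[0,1]$, $c(x)\equiv c_0$. Let $\mathcal{B}=\{x\mapsto\tilde b(\mu(x)) : \tilde b:\mathbb{R}\to\mathbb{R}\}$. Then $(\mu,c)$ is sound with respect to $\mathcal{B}$, i.e. $$\sup_{b\in\mathcal{B}}\mathbb{E}\big[b(X)(\mu(X)-\mathbb{E}[Y\mid X])-|b(X)|c(X)\big]\le 0,$$ if and only if the maximum calibration error of $\mu$ is at most $c_0$, where $$\mathrm{MCE}(\mu)=\max_{u\in[0,1]}\big|\mathbb{E}[Y\mid\mu(X)=u]-u\big|.$$ *)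

(* Defs.v *)
From HB Require Import structures.
From mathcomp Require Import all_boot all_order all_algebra.
From mathcomp Require Import all_classical all_reals all_analysis.
Set Implicit Arguments. Unset Strict Implicit. Unset Printing Implicit Defensive.
Import Order.TTheory GRing.Theory Num.Theory.
Import numFieldNormedType.Exports.
Local Open Scope classical_set_scope.
Local Open Scope ring_scope.

(* g : T -> R is a version of the conditional expectation E[Y | Z], i.e.
   E[Y | Z] = g(Z) a.s.: g is measurable, g(Z) is integrable, and
   E[Y 1_{Z in A}] = E[g(Z) 1_{Z in A}] for every measurable A. *)
Definition cond_exp_version {d d' : measure_display} {Omega : measurableType d}
  {R : realType} {T : measurableType d'} (P : probability Omega R)
  (Z : Omega -> T) (Y : Omega -> R) (g : T -> R) : Prop :=
  measurable_fun setT g /\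
  P.-integrable setT (EFin \o (g \o Z)) /\
  forall A : set T, measurable A ->
    (\int[P]_(w in Z @^-1` A) (Y w)%:E = \int[P]_(w in Z @^-1` A) (g (Z w))%:E)%E.

(* Soundness of (mu, c) w.r.t. B = { x |-> bt (mu x) }, with c x = c0 and
   g a version of E[Y | X]:
   sup_b E[ b(X) (mu(X) - E[Y|X]) - |b(X)| c(X) ] <= 0,
   b ranging over the b = bt \o mu for which the expectation is defined
   (bt measurable, bt(mu(X)) integrable). *)
Definition sound_wrt_mu {d d' : measure_display} {Omega : measurableType d}
  {R : realType} {T : measurableType d'} (P : probability Omega R)
  (X : Omega -> T) (mu : T -> R) (c : T -> R) (g : T -> R) : Prop :=
  forall bt : R -> R, measurable_fun setT bt ->
    P.-integrable setT (EFin \o (bt \o (mu \o X))) ->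
    (\int[P]_w ((bt (mu (X w)) * (mu (X w) - g (X w))
                 - `|bt (mu (X w))| * c (X w))%:E) <= 0)%E.

(* MCE(mu) <= c0 : the conditional expectation u |-> E[Y | mu(X) = u]
   (a version of it) satisfies max_{u in [0,1]} |E[Y|mu(X)=u] - u| <= c0. *)
Definition MCE_le {d d' : measure_display} {Omega : measurableType d}
  {R : realType} {T : measurableType d'} (P : probability Omega R)
  (X : Omega -> T) (Y : Omega -> R) (mu : T -> R) (c0 : R) : Prop :=
  exists h : R -> R, cond_exp_version P (mu \o X) Y h /\
    forall u : R, 0 <= u <= 1 -> `|h u - u| <= c0.

(* Main.v *)
Require Import Defs.
From HB Require Import structures.
From mathcomp Require Import all_boot all_order all_algebra.
From mathcomp Require Import all_classical all_reals all_analysis.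
From mathcomp Require Import measurable_realfun ring lra.
Set Implicit Arguments. Unset Strict Implicit. Unset Printing Implicit Defensive.
Import Order.TTheory GRing.Theory Num.Theory.
Import numFieldNormedType.Exports.
Local Open Scope classical_set_scope.
Local Open Scope ring_scope.

Section dm.
Context d (Omega : measurableType d) (R : realType) (P : probability Omega R).
Variable phi : Omega -> R.
Hypothesis mphi : measurable_fun setT phi.
Hypothesis phi0 : forall x, 0 <= phi x.
Hypothesis phi1 : forall x, phi x <= 1.
Local Open Scope ereal_scope.

Definition dm (A : set Omega) := \int[P]_(x in A) (phi x)%:E.

Let dm0 : dm set0 = 0. Proof. by rewrite /dm integral_set0. Qed.
Let dm_ge0 A : 0 <= dm A.
Proof. by apply: integral_ge0 => x _; rewrite lee_fin. Qed.
Let dm_sigma : semi_sigma_additive dm.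
Proof.
apply: semi_sigma_additive_nng_induced => //; exact/measurable_EFinP.
Qed.
HB.instance Definition _ := isMeasure.Build _ _ _ dm dm0 dm_ge0 dm_sigma.

Let dm_fin : fin_num_fun dm.
Proof.
move=> A mA; rewrite ge0_fin_numE ?dm_ge0//.
apply: (@le_lt_trans _ _ (\int[P]_(x in A) (cst 1 x))).
  apply: ge0_le_integral => //.
  - by move=> x _; rewrite lee_fin.
  - by apply/measurable_EFinP; exact: measurable_funTS.
  - by move=> x _; rewrite lee_fin.
by rewrite integral_cst// mul1e (le_lt_trans (probability_le1 P mA)) ?ltry.
Qed.
HB.instance Definition _ := Measure_isFinite.Build _ _ _ dm dm_fin.

Lemma dm_dom : dm `<< P.
Proof.
apply/null_content_dominatesP => A mA PA0.
by rewrite /dm null_set_integral//; apply/measurable_EFinP; exact: measurable_funTS.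
Qed.

Lemma density_integral (f : Omega -> \bar R) : (forall x, 0 <= f x) ->
  measurable_fun setT f ->
  \int[dm]_x f x = \int[P]_x (f x * (phi x)%:E).
Proof.
move=> f0 mf.
rewrite -(Radon_Nikodym_SigmaFinite.change_of_variables dm_dom)//.
apply: ae_eq_integral => //.
- apply: emeasurable_funM => //.
  exact: measurable_int (Radon_Nikodym_SigmaFinite.f_integrable dm_dom).
- by apply: emeasurable_funM => //; exact/measurable_EFinP.
- apply: ae_eqe_mul2l.
  apply: integral_ae_eq => //.
  + exact: Radon_Nikodym_SigmaFinite.f_integrable dm_dom.
  + exact/measurable_EFinP.
  + by move=> E _ mE; rewrite -Radon_Nikodym_SigmaFinite.f_integral//; exact: dm_dom.
Qed.
End dm.

Section tower.
Context (d d' : measure_display) (Omega : measurableType d) (R : realType) (P : probability Omega R).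
Context (S : measurableType d') (Z : Omega -> S) (mZ : measurable_fun setT Z).
Variables phi1 phi2 : Omega -> R.
Hypotheses (mphi1 : measurable_fun setT phi1) (mphi2 : measurable_fun setT phi2).
Hypotheses (phi10 : forall x, 0 <= phi1 x) (phi11 : forall x, phi1 x <= 1).
Hypotheses (phi20 : forall x, 0 <= phi2 x) (phi21 : forall x, phi2 x <= 1).
Hypothesis H12 : forall A, measurable A ->
  (\int[P]_(x in Z @^-1` A) (phi1 x)%:E = \int[P]_(x in Z @^-1` A) (phi2 x)%:E)%E.
Local Open Scope ereal_scope.

Lemma tower_ge0 (k : S -> \bar R) : (forall s, 0 <= k s) ->
  measurable_fun setT k ->
  \int[P]_x (k (Z x) * (phi1 x)%:E) = \int[P]_x (k (Z x) * (phi2 x)%:E).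
Proof.
move=> k0 mk.
have mkZ : measurable_fun setT (k \o Z) by exact: measurableT_comp.
rewrite -(@density_integral _ _ _ P phi1 mphi1 phi10 phi11)// -(@density_integral _ _ _ P phi2 mphi2 phi20 phi21)//.
rewrite -[LHS]/(\int[_]_(x in setT) (k \o Z) x) -[RHS]/(\int[_]_(x in setT) (k \o Z) x).
rewrite -[in LHS](preimage_setT Z) -[in RHS](preimage_setT Z).
rewrite -!ge0_integral_pushforward//.
apply: eq_measure_integral => A mA _.
exact: H12.
Qed.

Let maxM0 (a b : R) : (0 <= b)%R -> (Num.max (a * b) 0 = Num.max a 0 * b)%R.
Proof.
move=> b0; have [a0|a0] := boolP (0 <= a)%R.
  by rewrite (max_idPl a0) (max_idPl (mulr_ge0 a0 b0)).
have a0' : (a <= 0)%R by rewrite ltW // ltNge.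
by rewrite (max_idPr a0') mul0r (max_idPr (mulr_le0_ge0 a0' b0)).
Qed.

Let posE (phi : Omega -> R) (phi0 : forall x, (0 <= phi x)%R) (k : S -> R) :
  (fun x => (k (Z x) * phi x)%:E)^\+ = (fun x => (EFin \o k)^\+ (Z x) * (phi x)%:E).
Proof. by apply/funext => x; rewrite !funeposE /= -!EFin_max -EFinM maxM0. Qed.

Let negE (phi : Omega -> R) (phi0 : forall x, (0 <= phi x)%R) (k : S -> R) :
  (fun x => (k (Z x) * phi x)%:E)^\- = (fun x => (EFin \o k)^\- (Z x) * (phi x)%:E).
Proof. by apply/funext => x; rewrite !funenegE /= -!EFin_max -EFinM -mulNr maxM0. Qed.

Lemma tower (k : S -> R) : measurable_fun setT k ->
  \int[P]_x (k (Z x) * phi1 x)%:E = \int[P]_x (k (Z x) * phi2 x)%:E.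
Proof.
move=> mk.
have mEk : measurable_fun setT (EFin \o k) by exact/measurable_EFinP.
rewrite integralE [RHS]integralE.
rewrite (posE phi10) (negE phi10) (posE phi20) (negE phi20).
rewrite (tower_ge0 (k := (EFin \o k)^\+))//; last exact: measurable_funepos.
by rewrite (tower_ge0 (k := (EFin \o k)^\-))//; exact: measurable_funeneg.
Qed.
End tower.

Lemma mset_of d (T : measurableType d) (b : T -> bool) :
  measurable_fun setT b -> measurable [set x | b x].
Proof.
move=> mb; rewrite (_ : [set x | b x] = setT `&` b @^-1` [set true]).
  exact: mb.
by apply/seteqP; split => x /=; [move=> ->|move=> [_ ->]].
Qed.

Section helpers.
Context (d : measure_display) (Omega : measurableType d) (R : realType) (P : probability Omega R).
Local Open Scope ereal_scope.

Lemma ae0 (D : set Omega) (f : Omega -> R) : measurable D -> measurable_fun D f ->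
  (forall x, D x -> (0 <= f x)%R) -> \int[P]_(x in D) (f x)%:E <= 0 ->
  \forall x \ae P, D x -> f x = 0%R.
Proof.
move=> mD mf f0 H.
have H0 : \int[P]_(x in D) (f x)%:E = 0.
  by apply/eqP; rewrite eq_le H integral_ge0 // => x Dx; rewrite lee_fin f0.
have : \int[P]_(x in D) `|(f x)%:E| = 0.
  by rewrite -H0; apply: eq_integral => x /[!inE] Dx; rewrite gee0_abs // lee_fin f0.
move/(ae_eq_integral_abs P mD (f := EFin \o f)).
move=> /(_ ltac:(exact/measurable_EFinP)) ae.
by apply: filterS ae => x H1 Dx; have := H1 Dx => -[].
Qed.

Lemma cev_ae d' (S : measurableType d') (Z : Omega -> S) (Y : Omega -> R)
    (psi psi2 : S -> R) : measurable_fun setT Z ->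
  cond_exp_version P Z Y psi -> measurable_fun setT psi2 ->
  (\forall w \ae P, psi (Z w) = psi2 (Z w)) -> cond_exp_version P Z Y psi2.
Proof.
move=> mZ [mpsi [ipsi Hpsi]] mpsi2 ae.
have m1 : measurable_fun setT (EFin \o (psi \o Z)).
  by apply/measurable_EFinP; exact: measurableT_comp.
have m2 : measurable_fun setT (EFin \o (psi2 \o Z)).
  by apply/measurable_EFinP; exact: measurableT_comp.
have ae' : ae_eq P setT (EFin \o (psi \o Z)) (EFin \o (psi2 \o Z)).
  by apply: filterS ae => x /= ->.
split => //; split.
  apply/integrableP; split => //.
  rewrite (_ : \int[P]_x _ = \int[P]_x `|(EFin \o (psi \o Z)) x|).
    by move/integrableP : ipsi => [].
  apply: ae_eq_integral => //; first exact: measurableT_comp.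
    exact: measurableT_comp.
  exact: (ae_eq_abse (ae_eq_sym ae')).
move=> A mA; rewrite Hpsi //.
have mZA : measurable (Z @^-1` A) by rewrite -[X in measurable X]setTI; exact: mZ.
apply: ae_eq_integral => //.
- exact: measurable_funTS.
- exact: measurable_funTS.
- exact: ae_eq_subset ae'.
Qed.

Lemma cev_01 d' (S : measurableType d') (Z : Omega -> S) (Y : Omega -> R)
    (psi : S -> R) : measurable_fun setT Z -> measurable_fun setT Y ->
  (forall w, 0 <= Y w <= 1)%R ->
  cond_exp_version P Z Y psi -> \forall w \ae P, (0 <= psi (Z w) <= 1)%R.
Proof.
move=> mZ mY Y01 [mpsi [ipsi Hpsi]].
have mpZ : measurable_fun setT (psi \o Z) := measurableT_comp mpsi mZ.
have mA : measurable [set s | psi s < 0]%R.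
  exact: (mset_of (measurable_fun_ltr mpsi (measurable_cst (0%R : R)))).
have mB : measurable [set s | 1 < psi s]%R.
  exact: (mset_of (measurable_fun_ltr (measurable_cst (1%R : R)) mpsi)).
set D1 := Z @^-1` [set s | psi s < 0]%R.
set D2 := Z @^-1` [set s | 1 < psi s]%R.
have mD1 : measurable D1 by rewrite -[X in measurable X]setTI; exact: mZ.
have mD2 : measurable D2 by rewrite -[X in measurable X]setTI; exact: mZ.
have ae1 : \forall w \ae P, D1 w -> (- psi (Z w) = 0)%R.
  apply: ae0 => //.
  - by apply: measurable_funTS; exact: measurable_funN.
  - by move=> w; rewrite /D1 /= oppr_ge0 => /ltW.
  - under eq_integral do rewrite EFinN.
    rewrite integralN; last first.
      by apply: integrable_add_def => //; exact: (integrableS measurableT mD1 (@subsetT _ D1) ipsi).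
    rewrite -Hpsi// oppe_le0; apply: integral_ge0 => w _.
    by rewrite lee_fin; case/andP: (Y01 w).
have ae2 : \forall w \ae P, D2 w -> (psi (Z w) - 1 = 0)%R.
  apply: ae0 => //.
  - by apply: measurable_funTS; apply: measurable_funB.
  - by move=> w; rewrite /D2 /= subr_ge0 => /ltW.
  - under eq_integral do rewrite EFinB.
    rewrite (@integralB _ _ _ P D2 mD2 (EFin \o (psi \o Z)) (EFin \o cst 1%R))//; last 2 first.
    + exact: (integrableS measurableT mD2 (@subsetT _ D2) ipsi).
    + exact: finite_measure_integrable_cst.
    rewrite -Hpsi// sube_le0; apply: ge0_le_integral => //.
    + by move=> w _; rewrite /= lee_fin; have /andP[] := Y01 w.
    + by apply/measurable_EFinP; exact: measurable_funTS.
    + exact/measurable_EFinP.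
    + by move=> w _; rewrite /= lee_fin; have /andP[] := Y01 w.
apply: filterS2 ae1 ae2 => w H1 H2.
apply/andP; split.
  rewrite leNgt; apply/negP => lt0.
  by have := H1 lt0; move/eqP; rewrite oppr_eq0 => /eqP e; rewrite e ltxx in lt0.
rewrite leNgt; apply/negP => lt1.
by have := H2 lt1; move/eqP; rewrite subr_eq0 => /eqP e; rewrite e ltxx in lt1.
Qed.
End helpers.

Section existence.
Context (d : measure_display) (Omega : measurableType d) (R : realType) (P : probability Omega R).
Variables (Zm : Omega -> R) (Y : Omega -> R).
Hypotheses (mZm : measurable_fun setT Zm) (mY : measurable_fun setT Y).
Hypotheses (Y0 : forall w, 0 <= Y w) (Y1 : forall w, Y w <= 1).
Local Open Scope ereal_scope.

Let Zmix := isMeasurableFun.Build _ _ _ _ _ mZm.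
Let Zp : {mfun Omega >-> R} := HB.pack Zm Zmix.
Let mu' := distribution P Zp.

Definition nuY (A : set R) := \int[P]_(w in Zm @^-1` A) (Y w)%:E.

Let nuY0 : nuY set0 = 0. Proof. by rewrite /nuY preimage_set0 integral_set0. Qed.
Let nuY_ge0 A : 0 <= nuY A.
Proof. by apply: integral_ge0 => x _; rewrite lee_fin. Qed.
Let nuY_sigma : semi_sigma_additive nuY.
Proof.
move=> F mF tF mUF; rewrite /nuY preimage_bigcup.
have mEY : measurable_fun setT (EFin \o Y) by exact/measurable_EFinP.
apply: (@semi_sigma_additive_nng_induced _ _ _ P (EFin \o Y) mEY).
- by move=> x; rewrite /= lee_fin.
- by move=> n; rewrite -[X in measurable X]setTI; exact: mZm.
- apply/trivIsetP => /= i j _ _ ij; rewrite -preimage_setI.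
  by move/trivIsetP : tF => /(_ _ _ _ _ ij) ->//; rewrite preimage_set0.
- by rewrite -preimage_bigcup -[X in measurable X]setTI; exact: mZm.
Qed.
HB.instance Definition _ := isMeasure.Build _ _ _ nuY nuY0 nuY_ge0 nuY_sigma.

Let nuY_fin : fin_num_fun nuY.
Proof.
move=> A mA; rewrite ge0_fin_numE ?nuY_ge0//.
have mZA : measurable (Zm @^-1` A) by rewrite -[X in measurable X]setTI; exact: mZm.
apply: (@le_lt_trans _ _ (\int[P]_(x in Zm @^-1` A) (cst 1 x))).
  apply: ge0_le_integral => //.
  - by move=> x _; rewrite lee_fin.
  - by apply/measurable_EFinP; exact: measurable_funTS.
  - by move=> x _; rewrite lee_fin.
by rewrite integral_cst// mul1e (le_lt_trans (probability_le1 P mZA)) ?ltry.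
Qed.
HB.instance Definition _ := Measure_isFinite.Build _ _ _ nuY nuY_fin.

Let dom : nuY `<< mu'.
Proof.
apply/null_content_dominatesP => A mA muA0.
have mZA : measurable (Zm @^-1` A) by rewrite -[X in measurable X]setTI; exact: mZm.
rewrite /nuY null_set_integral//.
by apply/measurable_EFinP; exact: measurable_funTS.
Qed.

Let push (g : R -> \bar R) (D : set R) : measurable D -> measurable_fun D g ->
  (forall y, D y -> 0 <= g y) ->
  \int[mu']_(y in D) g y = \int[P]_(x in Zm @^-1` D) g (Zm x).
Proof.
move=> mD mg g0; rewrite -(@ge0_integral_pushforward _ _ _ _ _ Zm mZm P D g)//.
by move=> y /[!inE]; exact: g0.
Qed.

Lemma cond_exp_exists : exists h : R -> R, cond_exp_version P Zm Y h.
Proof.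
pose f := Radon_Nikodym_SigmaFinite.f nuY mu'.
have fi := Radon_Nikodym_SigmaFinite.f_integrable dom.
have ffin := Radon_Nikodym_SigmaFinite.f_fin_num dom.
have fE := Radon_Nikodym_SigmaFinite.f_integral dom.
have mf : measurable_fun setT f := measurable_int _ fi.
exists (fine \o f); split; [|split].
- exact: measurableT_comp.
- apply/integrableP; split.
    by apply/measurable_EFinP; apply: measurableT_comp => //; exact: measurableT_comp.
  rewrite [X in X < _](_ : _ = \int[P]_x `|f (Zm x)|); last first.
    by apply: eq_integral => x _; rewrite /= -abse_EFin fineK ?ffin.
  rewrite -[X in \int[P]_(x in X) _](preimage_setT Zm) -(push (g := fun y => `|f y|))//.
  + by move/integrableP : fi => [].
  + exact: measurableT_comp.
- move=> A mA.
  rewrite -/(nuY A) fE// push//.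
  + by apply: eq_integral => x _; rewrite /= fineK ?ffin.
  + exact: measurable_funTS.
  + by move=> y _; exact: Radon_Nikodym_SigmaFinite.f_ge0 dom y.
Qed.
End existence.

Definition clip01 (R : realType) (x : R) : R := Num.max 0 (Num.min x 1).

Lemma clip01_ge0 (R : realType) (x : R) : 0 <= clip01 x.
Proof. by rewrite /clip01 le_max lexx. Qed.

Lemma clip01_le1 (R : realType) (x : R) : clip01 x <= 1.
Proof. by rewrite /clip01 ge_max ler01 ge_min lexx orbT. Qed.

Lemma clip01_id (R : realType) (x : R) : 0 <= x <= 1 -> clip01 x = x.
Proof. by case/andP => x0 x1; rewrite /clip01 (min_idPl x1) (max_idPr x0). Qed.

Lemma clip01_dist (R : realType) (x u : R) : 0 <= u <= 1 ->
  `|clip01 x - u| <= `|x - u|.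
Proof.
case/andP => u0 u1; rewrite /clip01.
have [x0|x0] := boolP (0 <= x).
  have [x1|x1] := boolP (x <= 1).
    by rewrite (min_idPl x1) (max_idPr x0).
  have x1' : 1 <= x by rewrite ltW // ltNge.
  rewrite (min_idPr x1') (max_idPr ler01) !ger0_norm ?subr_ge0 ?(le_trans u1) //.
  by rewrite lerD2r.
have x0' : x <= 0 by rewrite ltW // ltNge.
rewrite (min_idPl (le_trans x0' ler01)) (max_idPl x0').
rewrite !ler0_norm ?subr_le0 ?(le_trans x0') // lerN2 lerD2r.
exact: x0'.
Qed.

Lemma measurable_clip01 d (T : measurableType d) (R : realType) (f : T -> R) :
  measurable_fun setT f -> measurable_fun setT (fun x => clip01 (f x)).
Proof.
move=> mf; apply: measurable_maxr; first exact: measurable_cst.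
by apply: measurable_minr => //; exact: measurable_cst.
Qed.

Section key.
Context (d d' : measure_display) (Omega : measurableType d) (R : realType)
  (P : probability Omega R) (T : measurableType d').
Variables (X : Omega -> T) (Y : Omega -> R) (mu : T -> R) (c0 : R) (g : T -> R) (h : R -> R).
Hypotheses (mX : measurable_fun setT X) (mY : measurable_fun setT Y)
  (Y01 : forall w, 0 <= Y w <= 1) (mmu : measurable_fun setT mu)
  (mu01 : forall x, 0 <= mu x <= 1) (c00 : 0 <= c0)
  (Hg : cond_exp_version P X Y g) (Hh : cond_exp_version P (mu \o X) Y h)
  (h01 : forall u, 0 <= h u <= 1).
Local Open Scope ereal_scope.

Let g' := fun x => clip01 (g x).
Let mg' : measurable_fun setT g' := measurable_clip01 Hg.1.
Let aeg : \forall w \ae P, g (X w) = g' (X w).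
Proof.
by apply: filterS (cev_01 mX mY Y01 Hg) => w H; rewrite /g' clip01_id.
Qed.
Let Hg' := cev_ae mX Hg mg' aeg.
Let Y0 w : (0 <= Y w)%R. Proof. by case/andP: (Y01 w). Qed.
Let Y1 w : (Y w <= 1)%R. Proof. by case/andP: (Y01 w). Qed.

Lemma key (bt : R -> R) : measurable_fun setT bt ->
  P.-integrable setT (EFin \o (bt \o (mu \o X))) ->
  \int[P]_w ((bt (mu (X w)) * (mu (X w) - g (X w)) - `|bt (mu (X w))| * c0)%:E) =
  \int[P]_w ((bt (mu (X w)) * (mu (X w) - h (mu (X w))) - `|bt (mu (X w))| * c0)%:E).
Proof.
move=> mbt ib.
have mmX : measurable_fun setT (mu \o X) := measurableT_comp mmu mX.
have mb : measurable_fun setT (fun w => bt (mu (X w))) := measurableT_comp mbt mmX.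
have mgX : measurable_fun setT (fun w => g (X w)) := measurableT_comp Hg.1 mX.
have mg'X : measurable_fun setT (fun w => g' (X w)) := measurableT_comp mg' mX.
have mhX : measurable_fun setT (fun w => h (mu (X w))) := measurableT_comp Hh.1 mmX.
have mmuX : measurable_fun setT (fun w => mu (X w)) := mmX.
have iabs : P.-integrable setT (abse \o (EFin \o (bt \o (mu \o X)))) := integrable_abse ib.
have iphi (phi : Omega -> R) : measurable_fun setT phi -> (forall w, 0 <= phi w <= 1)%R ->
    P.-integrable setT (EFin \o (fun w => bt (mu (X w)) * phi w)%R).
  move=> mphi phi01; apply: le_integrable iabs.
    by [].
    by apply/measurable_EFinP; exact: measurable_funM.
  move=> w _; rewrite /= lee_fin normr_id normrM ler_piMr //.
  by case/andP: (phi01 w) => p0 p1; rewrite ger0_norm.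
pose F w := (bt (mu (X w)) * mu (X w) - `|bt (mu (X w))| * c0)%R.
have iF : P.-integrable setT (EFin \o F).
  apply: le_integrable (integrableZl measurableT (1 + c0)%R iabs) => //.
    apply/measurable_EFinP; apply: measurable_funB; first exact: measurable_funM.
    apply: measurable_funM => //; first exact: measurableT_comp.
  move=> w _; rewrite /= lee_fin normrM normr_id (ger0_norm (addr_ge0 ler01 c00)) /F.
  rewrite (le_trans (ler_normB _ _)) // mulrDl mul1r normrM lerD //.
    by rewrite ler_piMr // ger0_norm; case/andP: (mu01 (X w)).
  by rewrite normrM normr_id (ger0_norm c00) mulrC.
transitivity (\int[P]_w ((bt (mu (X w)) * (mu (X w) - g' (X w)) - `|bt (mu (X w))| * c0)%:E)).
  apply: ae_eq_integral => //.
  - apply/measurable_EFinP; apply: measurable_funB.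
      by apply: measurable_funM => //; exact: measurable_funB.
    apply: measurable_funM => //; first exact: measurableT_comp.
  - apply/measurable_EFinP; apply: measurable_funB.
      by apply: measurable_funM => //; exact: measurable_funB.
    apply: measurable_funM => //; first exact: measurableT_comp.
  - by apply: filterS aeg => w /= -> _.
rewrite (eq_integral (fun w => (F w)%:E - (bt (mu (X w)) * g' (X w))%:E)); last first.
  by move=> w _; rewrite -EFinB /F; congr EFin; ring.
rewrite [RHS](eq_integral (fun w => (F w)%:E - (bt (mu (X w)) * h (mu (X w)))%:E)); last first.
  by move=> w _; rewrite -EFinB /F; congr EFin; ring.
rewrite integralB_EFin //; last first.
  by apply: iphi => // w; rewrite clip01_ge0 clip01_le1.
rewrite [RHS]integralB_EFin //; last exact: iphi.
congr (_ - _).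
have t1 := tower mX mY mg'X Y0 Y1 (fun w => clip01_ge0 _) (fun w => clip01_le1 _) Hg'.2.2
  (measurableT_comp mbt mmu).
have t2 := tower mmX mY mhX Y0 Y1 (fun w => proj1 (andP (h01 _))) (fun w => proj2 (andP (h01 _))) Hh.2.2 mbt.
transitivity (\int[P]_x (bt (mu (X x)) * Y x)%:E); [exact: esym t1 | exact: t2].
Qed.
End key.

Theorem proposition4 (d d' : measure_display) (Omega : measurableType d)
  (R : realType) (T : measurableType d') (P : probability Omega R)
  (X : Omega -> T) (Y : Omega -> R) (mu : T -> R) (c0 : R) (g : T -> R) :
  measurable_fun setT X ->
  measurable_fun setT Y ->
  (forall w, Y w = 0 \/ Y w = 1) ->
  measurable_fun setT mu ->
  (forall x, 0 <= mu x <= 1) ->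
  (* the law of mu(X) has support all of [0,1] *)
  (forall u : R, 0 <= u <= 1 -> forall e : R, 0 < e ->
     (0 < P [set w | (`|mu (X w) - u| < e)%R])%E) ->
  0 <= c0 -> c0 <= 1 ->
  cond_exp_version P X Y g ->
  (sound_wrt_mu P X mu (fun _ => c0) g <-> MCE_le P X Y mu c0).
Proof.
move=> mX mY Y01' mmu mu01 _ c00 c01 Hg.
have Y01 : forall w, 0 <= Y w <= 1.
  by move=> w; case: (Y01' w) => ->; rewrite ?lexx ?ler01.
have Y0 w : 0 <= Y w by case/andP: (Y01 w).
have Y1 w : Y w <= 1 by case/andP: (Y01 w).
have mmX : measurable_fun setT (mu \o X) := measurableT_comp mmu mX.
have clipver (h : R -> R) : cond_exp_version P (mu \o X) Y h ->
    cond_exp_version P (mu \o X) Y (fun u => clip01 (h u)).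
  move=> Hh; apply: (cev_ae mmX Hh (measurable_clip01 Hh.1)).
  by apply: filterS (cev_01 mmX mY Y01 Hh) => w H; rewrite clip01_id.
split.
- move=> Hs.
  have [h0 Hh0] := cond_exp_exists P mmX mY Y0 Y1.
  pose h1 := fun u => clip01 (h0 u).
  have Hh1 : cond_exp_version P (mu \o X) Y h1 := clipver h0 Hh0.
  have h101 : forall u, 0 <= h1 u <= 1 by move=> u; rewrite clip01_ge0 clip01_le1.
  have mh1 : measurable_fun setT h1 := Hh1.1.
  have keyb := key mX mY Y01 mmu mu01 c00 Hg Hh1 h101.
  have ibnd (bt : R -> R) : measurable_fun setT bt -> (forall u, `|bt u| <= 1) ->
      P.-integrable setT (EFin \o (bt \o (mu \o X))).
    move=> mbt b1; apply: (le_integrable measurableT _ _ (finite_measure_integrable_cst P 1 measurableT)).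
      by apply/measurable_EFinP; exact: measurableT_comp.
    by move=> w _; rewrite /= lee_fin normr1 b1.
  have aeS (s : R) : `|s| = 1 ->
      \forall w \ae P, ~ (c0 < s * (mu (X w) - h1 (mu (X w)))).
    move=> s1.
    have mf : measurable_fun setT (fun u : R => s * (u - h1 u)).
      by apply: measurable_funM => //; exact: measurable_funB.
    pose A := [set u : R | c0 < s * (u - h1 u)].
    have mA : measurable A := mset_of (measurable_fun_ltr (measurable_cst c0) mf).
    pose bt := fun u => s * \1_A u.
    have mbt : measurable_fun setT bt.
      by apply: measurable_funM => //; exact: measurable_indic.
    have b1 u : `|bt u| <= 1.
      by rewrite /bt normrM s1 mul1r indicE; case: (_ \in _); rewrite ?normr1 ?normr0 ?ler01.
    have S1 := Hs bt mbt (ibnd bt mbt b1).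
    rewrite keyb // in S1; last exact: ibnd.
    set D := (mu \o X) @^-1` A.
    have mD : measurable D by rewrite -[X in measurable X]setTI; exact: mmX.
    have ae' : \forall w \ae P, D w -> s * (mu (X w) - h1 (mu (X w))) - c0 = 0.
      apply: ae0 => //.
      + apply: measurable_funTS; apply: measurable_funB => //.
        exact: (measurableT_comp mf mmX).
      + by move=> w Dw; rewrite subr_ge0 ltW.
      + rewrite integral_mkcond; apply: le_trans S1; rewrite le_eqVlt; apply/orP; left.
        apply/eqP; apply: eq_integral => w _; rewrite /patch /bt indicE.
        case: ifP => wD.
          have -> : (mu (X w) \in A) = true by apply/mem_set; exact: (set_mem wD).
          by rewrite mulr1 s1 mul1r.
        have -> : (mu (X w) \in A) = false.
          apply/negP => /set_mem H.
          by rewrite (mem_set (H : D w)) in wD.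
        by rewrite mulr0 !mul0r normr0 mul0r subr0.
    apply: filterS ae' => w H lt.
    by have := H lt; move/eqP; rewrite subr_eq0 => /eqP e; rewrite e ltxx in lt.
  have ae1 := aeS 1 (normr1 _).
  have ae2 := aeS (-1) ltac:(by rewrite normrN normr1).
  pose h := fun u => u + Num.max (- c0) (Num.min (h1 u - u) c0).
  exists h; split.
  + apply: (cev_ae mmX Hh1).
      apply: measurable_funD => //; apply: measurable_maxr; first exact: measurable_cst.
      apply: measurable_minr; last exact: measurable_cst.
      exact: measurable_funB.
    apply: filterS2 ae1 ae2 => w H1 H2 /=.
    move/negP: H1; rewrite -leNgt mul1r => H1.
    move/negP: H2; rewrite -leNgt mulN1r => H2.
    rewrite /h (min_idPl _); last by lra.
    rewrite (max_idPr _); last by lra.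
    by ring.
  + move=> u _; rewrite /h addrC addKr ler_norml; apply/andP; split.
      by rewrite le_max lexx.
    by rewrite ge_max ge_min lexx orbT andbT; lra.
- case=> h [Hh hb] bt mbt ib.
  rewrite (key mX mY Y01 mmu mu01 c00 Hg (clipver h Hh)) //; last first.
    by move=> u; rewrite clip01_ge0 clip01_le1.
  have pw w : bt (mu (X w)) * (mu (X w) - clip01 (h (mu (X w)))) <= `|bt (mu (X w))| * c0.
    rewrite (le_trans (ler_norm _)) // normrM ler_wpM2l //.
    by rewrite distrC (le_trans (clip01_dist _ (mu01 _))) // hb.
  rewrite (eq_integral (fun w => - ((`|bt (mu (X w))| * c0 -
      bt (mu (X w)) * (mu (X w) - clip01 (h (mu (X w)))))%:E))%E); last first.
    by move=> w _; rewrite -EFinN; congr EFin; ring.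
  rewrite integral_ge0N; first by rewrite oppe_le0 integral_ge0 // => w _; rewrite lee_fin subr_ge0.
  by move=> w _; rewrite lee_fin subr_ge0.
Qed.
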